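(* An algebra $(S,\sqcup,\cap)$ with two binary operations is functional (isomorphic to a set of partial functions closed under override and intersection, with the operations interpreted as override and intersection) if and only if it is an ado-semilattice. In particular the functional algebras of signature $(\sqcup,\cap)$ form the finitely axiomatised variety of ado-semilattices.
   Context: For sets $X,Y$, $\mathrm{Par}(X,Y)$ is the set of partial functions from $X$ to $Y$, viewed as sets of ordered pairs. For $f,g\in\mathrm{Par}(X,Y)$, override is $f\sqcup g=f\cup(g-f)$, where $g-f$ is the restriction of $g$ to $X\setminus\mathrm{dom}(f)$; $f\cap g$ is set-theoretic intersection. An algebra $(S,\sqcup,\cap)$ is functional if it is isomorphic to $(A,\sqcup,\cap)$ for some $A\subseteq\mathrm{Par}(X,Y)$ closed under $\sqcup$ and $\cap$. An o-semilattice is an algebra $(L,\cap,\sqcup)$ such that $(L,\cap)$ is a semilattice and, with $x\leq y$ iff $x=x\cap y$, for all $x,y,z$: (i) $x\leq x\sqcup y$; (ii) $(x\cap y)\sqcup(y\cap z)\leq y$; (iii) $x\sqcup y\leq x\sqcup(y\cap(x\sqcup y))$; (iv) $x\cap z\leq(x\cap y)\sqcup z$. It is distributive if $(a\cap d)\sqcup((b\cap d)\cap(c\cap d))=((a\cap d)\sqcup(b\cap d))\cap((a\cap d)\sqcup(c\cap d))$ for all $a,b,c,d$, and associative if $\sqcup$ is associative. An ado-semilattice is an associative distributive o-semilattice. *)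

(* Defs.v *)
(** A partial function from X to Y, viewed as a set of ordered pairs:
    a relation [f : X -> Y -> Prop] (f x y <-> (x,y) ∈ f) that is functional. *)
Definition is_partial_fun {X Y : Type} (f : X -> Y -> Prop) : Prop :=
  forall x y1 y2, f x y1 -> f x y2 -> y1 = y2.

Definition pdom {X Y : Type} (f : X -> Y -> Prop) (x : X) : Prop :=
  exists y, f x y.

Definition poverride {X Y : Type} (f g : X -> Y -> Prop) : X -> Y -> Prop :=
  fun x y => f x y \/ (g x y /\ ~ pdom f x).

Definition pinter {X Y : Type} (f g : X -> Y -> Prop) : X -> Y -> Prop :=
  fun x y => f x y /\ g x y.

(** (S, join, meet) is functional: isomorphic to some A ⊆ Par(X,Y) closed under
    ⊔ and ∩.  Equivalently: there is an injective map into Par(X,Y) turning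
    join into override and meet into intersection (its image is such an A). *)
Definition functional {S : Type} (join meet : S -> S -> S) : Prop :=
  exists (X Y : Type) (h : S -> X -> Y -> Prop),
    (forall s, is_partial_fun (h s)) /\
    (forall s t, h s = h t -> s = t) /\
    (forall s t, h (join s t) = poverride (h s) (h t)) /\
    (forall s t, h (meet s t) = pinter (h s) (h t)).

Definition mle {S : Type} (meet : S -> S -> S) (x y : S) : Prop := x = meet x y.

Definition is_semilattice {S : Type} (meet : S -> S -> S) : Prop :=
  (forall x y z, meet x (meet y z) = meet (meet x y) z) /\
  (forall x y, meet x y = meet y x) /\
  (forall x, meet x x = x).

Definition o_semilattice {S : Type} (meet join : S -> S -> S) : Prop :=
  is_semilattice meet /\
  (forall x y, mle meet x (join x y)) /\
  (forall x y z, mle meet (join (meet x y) (meet y z)) y) /\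
  (forall x y, mle meet (join x y) (join x (meet y (join x y)))) /\
  (forall x y z, mle meet (meet x z) (join (meet x y) z)).

Definition distributive_o {S : Type} (meet join : S -> S -> S) : Prop :=
  forall a b c d,
    join (meet a d) (meet (meet b d) (meet c d)) =
    meet (join (meet a d) (meet b d)) (join (meet a d) (meet c d)).

Definition associative_o {S : Type} (join : S -> S -> S) : Prop :=
  forall x y z, join x (join y z) = join (join x y) z.

Definition ado_semilattice {S : Type} (meet join : S -> S -> S) : Prop :=
  o_semilattice meet join /\ distributive_o meet join /\ associative_o join.

(* Main.v *)
Require Import Defs.
From Stdlib Require Import Classical FunctionalExtensionality PropExtensionality ClassicalEpsilon.

Definition incl {T : Type} (A B : T -> Prop) := forall x, A x -> B x.

Lemma set_ext {T : Type} (A B : T -> Prop) : incl A B -> incl B A -> A = B.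
Proof.
  intros H1 H2. apply functional_extensionality. intros x.
  apply propositional_extensionality. split; auto.
Qed.

Section Tower.
Variable T : Type.
Variable A0 : T -> Prop.
Variable g : (T -> Prop) -> (T -> Prop).
Hypothesis g_ext : forall A, incl A (g A).

Definition sup (C : (T -> Prop) -> Prop) : T -> Prop :=
  fun x => A0 x \/ exists A, C A /\ A x.

Inductive tower : (T -> Prop) -> Prop :=
| tw_g : forall A, tower A -> tower (g A)
| tw_sup : forall C, (forall A, C A -> tower A) -> tower (sup C).

Lemma tower_A0 x : tower x -> incl A0 x.
Proof.
  induction 1 as [A _ IH | C _ IH]; intros y Hy.
  - apply g_ext. auto.
  - left. auto.
Qed.

Definition extreme x := forall y, tower y -> incl y x -> ~ incl x y -> incl (g y) x.

Lemma lemA x : tower x -> extreme x -> forall y, tower y -> incl y x \/ incl (g x) y.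
Proof.
  intros Tx Ex y Ty. induction Ty as [y' Ty' IH | C HC IH].
  - destruct IH as [H|H].
    + destruct (classic (incl x y')) as [H'|H'].
      * right. rewrite (set_ext _ _ H H'). intros z Hz; auto.
      * left. apply Ex; auto.
    + right. intros z Hz. apply g_ext. auto.
  - destruct (classic (exists A, C A /\ incl (g x) A)) as [[A [CA HA]]|N].
    + right. intros z Hz. right. exists A. auto.
    + left. intros z [Hz|[A [CA Hz]]].
      * apply (tower_A0 x Tx). auto.
      * destruct (IH A CA) as [H|H]. auto. exfalso. apply N. exists A. auto.
Qed.

Lemma lemB x : tower x -> extreme x.
Proof.
  induction 1 as [x' Tx' IH | C HC IH].
  - intros y Ty Hyx Hn. destruct (lemA x' Tx' IH y Ty) as [H|H].
    + destruct (classic (incl x' y)) as [H'|H'].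
      * rewrite (set_ext _ _ H H'). intros z Hz; auto.
      * intros z Hz. apply g_ext. apply (IH y Ty H H'). auto.
    + exfalso. apply Hn. intros z Hz. apply H. auto.
  - intros y Ty Hyx Hn.
    assert (HH : exists e, sup C e /\ ~ y e).
    { apply NNPP. intros N. apply Hn. intros e He. apply NNPP. intros Ne. apply N. eauto. }
    destruct HH as [e [[He|[A [CA He]]] Ne]].
    + exfalso. apply Ne. apply (tower_A0 y Ty). auto.
    + destruct (lemA A (HC A CA) (IH A CA) y Ty) as [H|H].
      * assert (N : ~ incl A y) by (intro I; apply Ne; auto).
        intros z Hz. right. exists A. split; auto. apply (IH A CA y Ty H N). auto.
      * exfalso. apply Ne. apply H. apply g_ext. auto.
Qed.

Lemma tower_chain x y : tower x -> tower y -> incl x y \/ incl y x.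
Proof.
  intros Tx Ty. destruct (lemA x Tx (lemB x Tx) y Ty) as [H|H]; auto.
  left. intros z Hz. apply H. apply g_ext. auto.
Qed.

End Tower.

Lemma zorn_sets (T : Type) (P : (T -> Prop) -> Prop) (A0 : T -> Prop) :
  P A0 ->
  (forall C : (T -> Prop) -> Prop, (forall A, C A -> P A) ->
     (forall A B, C A -> C B -> incl A B \/ incl B A) ->
     (forall A, C A -> incl A0 A) ->
     P (fun x => A0 x \/ exists A, C A /\ A x)) ->
  exists M, P M /\ incl A0 M /\ forall B, P B -> incl M B -> incl B M.
Proof.
  intros P0 Hsup.
  assert (gex : forall A, exists B, incl A B /\ (P A -> P B) /\
     (P A -> incl B A -> forall C, P C -> incl A C -> incl C A)).
  { intros A. destruct (classic (exists C, P A /\ P C /\ incl A C /\ ~ incl C A)) as [[C [PA [PC [H1 H2]]]]|N].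
    - exists C. split; [exact H1|]. split; [intros; exact PC|]. intros _ I; contradiction.
    - exists A. split. intros x; auto. split; auto. intros PA _ C PC H.
      apply NNPP. intro N'. apply N. exists C. auto. }
  set (g := fun A => proj1_sig (constructive_indefinite_description _ (gex A))).
  assert (gspec : forall A, incl A (g A) /\ (P A -> P (g A)) /\
     (P A -> incl (g A) A -> forall C, P C -> incl A C -> incl C A)).
  { intros A. unfold g. destruct (constructive_indefinite_description _ (gex A)). simpl. auto. }
  assert (g_ext : forall A, incl A (g A)) by (intros A; apply (proj1 (gspec A))).
  assert (TP : forall x, tower T A0 g x -> P x /\ incl A0 x).
  { induction 1 as [A TA [PA IA] | C HC IH].
    - split. apply gspec; auto. intros z Hz. apply g_ext. auto.
    - split.
      + apply Hsup. intros A CA. apply IH; auto.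
        intros A B CA CB. apply (tower_chain T A0 g g_ext); auto.
        intros A CA. apply IH; auto.
      + intros z Hz. left. auto. }
  set (M := sup T A0 (tower T A0 g)).
  assert (TM : tower T A0 g M) by (apply tw_sup; auto).
  destruct (TP M TM) as [PM IM].
  exists M. split; auto. split; auto.
  apply (proj2 (proj2 (gspec M))); auto.
  intros z Hz. right. exists (g M). split; auto. apply tw_g. auto.
Qed.


Section Alg.
Variable S : Type.
Variables m j : S -> S -> S.
Notation le := (mle m).
Hypothesis mA : forall x y z, m x (m y z) = m (m x y) z.
Hypothesis mC : forall x y, m x y = m y x.
Hypothesis mI : forall x, m x x = x.
Hypothesis o1 : forall x y, le x (j x y).
Hypothesis o2 : forall x y z, le (j (m x y) (m y z)) y.
Hypothesis o3 : forall x y, le (j x y) (j x (m y (j x y))).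
Hypothesis o4 : forall x y z, le (m x z) (j (m x y) z).
Hypothesis dist : forall a b c d,
    j (m a d) (m (m b d) (m c d)) = m (j (m a d) (m b d)) (j (m a d) (m c d)).
Hypothesis jA : forall x y z, j x (j y z) = j (j x y) z.

Lemma le_refl x : le x x.
Proof. unfold mle. now rewrite mI. Qed.
Lemma le_antisym x y : le x y -> le y x -> x = y.
Proof. unfold mle. intros H1 H2. rewrite H1, H2 at 1. rewrite mC. rewrite <- H2. easy. Qed.
Lemma le_trans x y z : le x y -> le y z -> le x z.
Proof. unfold mle. intros H1 H2. rewrite H1 at 1. rewrite H2. rewrite mA. now rewrite <- H1. Qed.
Lemma le_ml x y : le (m x y) x.
Proof. unfold mle. rewrite (mC (m x y) x), mA, mI. easy. Qed.
Lemma le_mr x y : le (m x y) y.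
Proof. unfold mle. rewrite <- mA, mI. easy. Qed.
Lemma le_m z x y : le z x -> le z y -> le z (m x y).
Proof. unfold mle. intros H1 H2. rewrite mA, <- H1. easy. Qed.
Lemma le_meq x y : le x y -> m y x = x.
Proof. unfold mle. intros H. rewrite mC. now rewrite <- H. Qed.
Lemma le_meq' x y : le x y -> m x y = x.
Proof. unfold mle. intros H. now rewrite <- H. Qed.
Lemma le_mm x y x' y' : le x x' -> le y y' -> le (m x y) (m x' y').
Proof. intros. apply le_m. eapply le_trans. apply le_ml. easy. eapply le_trans. apply le_mr. easy. Qed.

Lemma jB1 x : j x x = x.
Proof. apply le_antisym. generalize (o2 x x x). now rewrite mI. apply o1. Qed.
Lemma jB3 x y z : le x y -> le z y -> le (j x z) y.
Proof. intros H1 H2. generalize (o2 x y z). rewrite (le_meq' _ _ H1), (le_meq _ _ H2). easy. Qed.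
Lemma jB4 x y : le x y -> j x y = y.
Proof. intros H. apply le_antisym. apply jB3; auto using le_refl.
  generalize (o4 y x y). rewrite mI, (le_meq _ _ H). easy. Qed.
Lemma jB4' x y : le y x -> j x y = x.
Proof. intros H. apply le_antisym. apply jB3; auto using le_refl. apply o1. Qed.
Lemma lub a b u : le a u -> le b u -> le b (j a b).
Proof. intros H1 H2. generalize (o4 u a b). rewrite (le_meq _ _ H1), (le_meq _ _ H2). easy. Qed.
Lemma G1 x y : j x y = j x (m y (j x y)).
Proof. apply le_antisym. apply o3. apply jB3. apply o1. apply le_mr. Qed.
Lemma G4 x y y' : le y y' -> le (j x y) (j x y').
Proof. intros H. rewrite <- (jB4 _ _ H). rewrite jA. apply o1. Qed.
Lemma jcomm a b u : le a u -> le b u -> j a b = j b a.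
Proof. intros H1 H2. apply le_antisym; apply jB3; try apply o1; eapply lub; eauto. Qed.
Lemma LDb a b c u : le a u -> le b u -> le c u -> j a (m b c) = m (j a b) (j a c).
Proof. intros Ha Hb Hc. generalize (dist a b c u). rewrite <- Ha, <- Hb, <- Hc. easy. Qed.
Lemma DD x y z u : le x u -> le y u -> le z u -> m x (j y z) = j (m x y) (m x z).
Proof.
  intros Hx Hy Hz.
  assert (Hxy : le (m x y) u) by (eapply le_trans; [apply le_ml| easy]).
  assert (Hxz : le (m x z) u) by (eapply le_trans; [apply le_ml| easy]).
  rewrite (LDb (m x y) x z u Hxy Hx Hz).
  rewrite (jB4 _ _ (le_ml x y)).
  rewrite (jcomm (m x y) z u Hxy Hz).
  rewrite (LDb z x y u Hz Hx Hy).
  rewrite mA. rewrite (le_meq' _ _ (lub z x u Hz Hx)).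
  now rewrite (jcomm z y u Hz Hy).
Qed.
Lemma LD x y z : j x (m y z) = m (j x y) (j x z).
Proof.
  apply le_antisym.
  - apply le_m; apply G4; [apply le_ml | apply le_mr].
  - set (M := m (j x y) (j x z)).
    set (y' := m y (j x y)). set (z' := m z (j x z)).
    assert (E1 : M = j (m M x) (m M y')).
    { rewrite <- (DD M x y' (j x y)); [| apply le_ml | apply o1 | apply le_mr].
      unfold y'. rewrite <- G1. symmetry. apply le_meq'. apply le_ml. }
    assert (E2 : M = j (m M x) (m M z')).
    { rewrite <- (DD M x z' (j x z)); [| apply le_mr | apply o1 | apply le_mr].
      unfold z'. rewrite <- G1. symmetry. apply le_meq'. apply le_mr. }
    assert (E3 : j (m M x) (m (m M y') (m M z')) = M).
    { rewrite (LDb (m M x) (m M y') (m M z') M); try apply le_ml.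
      rewrite <- E1, <- E2. apply mI. }
    rewrite <- E3. apply jB3.
    + eapply le_trans. apply le_mr. apply o1.
    + set (W := m (m M y') (m M z')).
      assert (HW1 : le W y').
      { eapply le_trans. apply le_ml. apply le_mr. }
      assert (HW2 : le W z').
      { eapply le_trans. apply le_mr. apply le_mr. }
      assert (HWyz : le W (m y z)).
      { apply le_m. eapply le_trans. apply HW1. apply le_ml.
        eapply le_trans. apply HW2. apply le_ml. }
      eapply le_trans. eapply (lub x W (j x y)). apply o1.
      eapply le_trans. apply HW1. apply le_mr.
      apply G4. easy.
Qed.
Lemma Slem x y w : le x (j y w) -> le x (j (m x y) w).
Proof.
  intros H. set (w' := m w (j y w)).
  assert (E : j y w = j y w') by apply G1.
  rewrite E in H.
  assert (Ex : m x (j y w') = j (m x y) (m x w')).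
  { apply (DD x y w' (j y w')). exact H. apply o1. rewrite <- E. apply le_mr. }
  apply le_trans with (y := m x (j y w')). { rewrite <- H. apply le_refl. }
  rewrite Ex. apply G4. eapply le_trans. apply le_mr. apply le_ml.
Qed.

Definition psi d e := m d (j e d).

Lemma ANT d e e' : le e e' -> le (psi d e') (psi d e).
Proof.
  intros H. unfold psi. apply le_m. apply le_ml.
  eapply le_trans. eapply (lub e (m d (j e' d)) (j e' d)).
  eapply le_trans. apply H. apply o1. apply le_mr.
  apply G4. apply le_ml.
Qed.

Lemma KEY p q s d : le p s -> le q s -> le (m p q) d ->
  le d (j (psi d p) (psi d q)).
Proof.
  intros Hp Hq Hr.
  set (P := psi d p).
  set (q1 := m q (j P q)).
  assert (Hq1s : le q1 s) by (eapply le_trans; [apply le_ml | easy]).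
  assert (S1 : le q1 (j p q1)) by (eapply lub; eauto).
  assert (S2 : le (j p q1) (j p (j P q))) by (apply G4; apply le_mr).
  assert (S3 : j p (j P q) = j p (j d q)).
  { rewrite jA. unfold P, psi. rewrite <- G1. now rewrite jA. }
  assert (S4 : le q1 (j d q)).
  { assert (H := le_trans _ _ _ S1 S2). rewrite S3 in H.
    apply Slem in H. rewrite jB4 in H. easy.
    eapply le_trans. 2: apply o1.
    eapply le_trans. 2: apply Hr.
    apply le_m. apply le_mr. eapply le_trans. apply le_ml. apply le_ml. }
  assert (S5 : le (j P q) (j d q)).
  { assert (E : j P q = j P q1) by apply G1. rewrite E. apply jB3; auto.
    eapply le_trans. apply le_ml. apply o1. }
  assert (S6 : le d (j (j P q) d)).
  { generalize (o4 (j d q) (j P q) d).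
    rewrite (le_meq _ _ (o1 d q)). rewrite (le_meq _ _ S5). easy. }
  assert (S7 : j P (psi d q) = m d (j (j P q) d)).
  { unfold psi. rewrite LD. rewrite jB4. now rewrite jA. apply le_ml. }
  rewrite S7. apply le_m. apply le_refl. easy.
Qed.

Definition good (a c : S) (F : S -> Prop) : Prop :=
  (forall x y, F x -> le x y -> F y) /\ (forall x y, F x -> F y -> F (m x y)) /\
  F a /\ ~ F c /\ le c a /\ (forall x, ~ F x -> exists g, F g /\ le (m g x) c).

Section Filt.
Variables a c : S.
Variable F : S -> Prop.
Hypothesis Hg : good a c F.
Fact Fup : forall x y, F x -> le x y -> F y.
Proof. apply Hg. Qed.
Fact Fmeet : forall x y, F x -> F y -> F (m x y).
Proof. apply Hg. Qed.
Fact Fa : F a.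
Proof. apply Hg. Qed.
Fact Fc : ~ F c.
Proof. apply Hg. Qed.
Fact Hca : le c a.
Proof. apply Hg. Qed.
Fact Fmax : forall x, ~ F x -> exists g, F g /\ le (m g x) c.
Proof. apply Hg. Qed.
Local Hint Resolve Fmeet Fa : core.

Lemma F_PR x y u : le x u -> le y u -> F (j x y) -> F x \/ F y.
Proof.
  intros Hx Hy H. destruct (classic (F x)) as [?|Nx]; auto.
  destruct (classic (F y)) as [?|Ny]; auto. exfalso.
  destruct (Fmax _ Nx) as [g1 [G1' H1]]. destruct (Fmax _ Ny) as [g2 [G2' H2]].
  set (g := m (m g1 g2) (j x y)).
  assert (Fg : F g) by (apply Fmeet; auto).
  assert (Hgu : le g u) by (eapply le_trans; [apply le_mr | apply jB3; auto]).
  assert (E : m g (j x y) = j (m g x) (m g y)) by (apply DD with (u := u); auto).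
  assert (E2 : m g (j x y) = g) by (apply le_meq'; apply le_mr).
  apply Fc. apply Fup with g; auto. rewrite <- E2, E. apply jB3.
  - eapply le_trans. 2: apply H1. apply le_mm. eapply le_trans. apply le_ml. apply le_ml. apply le_refl.
  - eapply le_trans. 2: apply H2. apply le_mm. eapply le_trans. apply le_ml. apply le_mr. apply le_refl.
Qed.

Lemma F_K1 x y : F (j x y) -> F x \/ F (m y (j x y)).
Proof. intros H. rewrite G1 in H. eapply F_PR. 3: exact H. apply o1. rewrite <- G1. apply le_mr. Qed.
Lemma F_K1' x y : F (j x y) -> F x \/ F y.
Proof. intros H. destruct (F_K1 _ _ H) as [|H']; auto. right. eapply Fup. exact H'. apply le_ml. Qed.

Definition D s := F s \/ ~ F (j s a).

Lemma U_psi s : ~ F s -> F (j s a) -> F (psi a s).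
Proof. intros H1 H2. destruct (F_K1 _ _ H2); [contradiction | easy]. Qed.

Lemma nD s : ~ D s -> ~ F s /\ F (j s a).
Proof. unfold D. intros H. split. intro; apply H; auto. apply NNPP; intro; apply H; auto. Qed.

Lemma P1 s t : D (m s t) -> D s.
Proof.
  intros H. apply NNPP. intros N. apply nD in N as [N1 N2].
  destruct H as [H|H].
  - apply N1. eapply Fup. exact H. apply le_ml.
  - apply H. eapply Fup. apply (U_psi _ N1 N2).
    eapply le_trans. apply ANT. apply (le_ml s t). apply le_mr.
Qed.

Lemma Dup s s' : D s -> le s s' -> D s'.
Proof. intros H E. apply (P1 s' s). rewrite <- le_meq' with (x := s) (y := s') in H; auto. rewrite mC. easy. Qed.

Lemma FD s q : F s -> le q s -> D q -> F q.
Proof.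
  intros Hs Hq [H|H]; auto. exfalso. apply H.
  eapply Fup. apply (Fmeet _ _ Hs Fa).
  generalize (o4 s q a). rewrite (le_meq _ _ Hq). easy.
Qed.

Lemma FT p q s : le p s -> le q s -> D p -> D q -> D (m p q).
Proof.
  intros Hp Hq Dp Dq.
  destruct (classic (F p)) as [Fp|Np].
  - left. apply Fmeet; auto. apply (FD s q); auto. eapply Fup; [exact Fp | exact Hp].
  - destruct (classic (F q)) as [Fq|Nq].
    + left. apply Fmeet; auto. apply (FD s p); auto. eapply Fup; [exact Fq | exact Hq].
    + destruct Dp as [|Dp]; [contradiction|]. destruct Dq as [|Dq]; [contradiction|].
      right. intros Hr. set (r := m p q) in *.
      assert (Nr : ~ F r) by (intro; apply Np; eapply Fup; eauto; apply le_ml).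
      set (w := psi a r).
      assert (Fw : F w) by (apply U_psi; auto).
      set (d := j r w).
      assert (Fd : F d).
      { apply Fup with w; auto. eapply lub. apply (o1 r a). apply le_mr. }
      assert (Hk := KEY p q s d Hp Hq (o1 r w)).
      assert (Fj : F (j (psi d p) (psi d q))) by (eapply Fup; eauto).
      assert (Hw : le w a) by apply le_ml.
      destruct (F_PR _ _ d (le_ml _ _) (le_ml _ _) Fj) as [H|H].
      * apply Dp. assert (F (j p d)) by (eapply Fup; [apply H| apply le_mr]).
        unfold d in H0. rewrite jA, (jB4' p r (le_ml p q)) in H0.
        eapply Fup. apply H0. apply G4. easy.
      * apply Dq. assert (F (j q d)) by (eapply Fup; [apply H| apply le_mr]).
        unfold d in H0. rewrite jA, (jB4' q r (le_mr p q)) in H0.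
        eapply Fup. apply H0. apply G4. easy.
Qed.

Lemma DT s t u : D (m s t) -> D (m t u) -> D (m s u).
Proof.
  intros H1 H2. rewrite mC in H1.
  assert (H := FT (m t s) (m t u) t (le_ml _ _) (le_ml _ _) H1 H2).
  eapply Dup. apply H. apply le_m.
  eapply le_trans. apply le_ml. apply le_mr.
  eapply le_trans. apply le_mr. apply le_mr.
Qed.

Lemma lemU s X : ~ F s -> F (j s a) -> F X -> F (j s X).
Proof.
  intros N1 N2 HX. apply Fup with (m (psi a s) X).
  apply Fmeet; auto. apply U_psi; auto.
  eapply le_trans. eapply (lub s _ (j s a)). apply o1.
  eapply le_trans. apply le_ml. apply le_mr.
  apply G4. apply le_mr.
Qed.

Lemma L3a s t : D (j s t) -> D s \/ D t.
Proof.
  intros H. apply NNPP. intros N.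
  assert (Ns : ~ D s) by auto. assert (Nt : ~ D t) by auto.
  apply nD in Ns as [Ns1 Ns2]. apply nD in Nt as [Nt1 Nt2].
  destruct H as [H|H].
  - destruct (F_K1' _ _ H); contradiction.
  - apply H. rewrite <- jA. apply lemU; auto.
Qed.

Lemma L3b s t : D s -> D (j s t).
Proof. intros H. eapply Dup. exact H. apply o1. Qed.

Lemma L3c s t : D t -> D (j s t).
Proof.
  intros H. apply NNPP. intros N. apply nD in N as [N1 N2].
  assert (Ns : ~ F s) by (intro; apply N1; eapply Fup; eauto; apply o1).
  assert (Ps := U_psi _ N1 N2).
  destruct (classic (F t)) as [Ft|Nt].
  - apply N1. apply Fup with (m (psi (a) (j s t)) t). apply Fmeet; auto.
    eapply le_trans. eapply (lub s _ (j s (j t a))). apply o1.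
    rewrite jA. eapply le_trans. apply le_ml. apply le_mr.
    apply G4. apply le_mr.
  - destruct H as [|H]; [contradiction|]. apply H.
    rewrite <- jA in N2. destruct (F_K1 _ _ N2) as [|H2]; [contradiction|].
    eapply Fup. apply H2. apply le_ml.
Qed.

Lemma L5 s t : ~ D s -> D t -> D (m (j s t) t).
Proof.
  intros N Dt. apply nD in N as [N1 N2].
  destruct (classic (F t)) as [Ft|Nt].
  - left. apply Fmeet; auto.
    apply Fup with (m (psi a s) t). apply Fmeet; auto. apply U_psi; auto.
    eapply le_trans. eapply (lub s _ (j s a)). apply o1.
    eapply le_trans. apply le_ml. apply le_mr.
    apply G4. apply le_mr.
  - destruct Dt as [|Dt]; [contradiction|]. right. intros He.
    assert (H := lemU _ _ N1 N2 He).
    rewrite jA in H. rewrite (mC (j s t) t), <- G1 in H. rewrite <- jA in H.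
    destruct (F_K1 _ _ H) as [|H2]; [contradiction|].
    apply Dt. eapply Fup. apply H2. apply le_ml.
Qed.

Lemma Da : D a.
Proof. left; auto. Qed.
Lemma nDc : ~ D c.
Proof. intros [H|H]. apply Fc; auto. apply H. rewrite jB4. apply Fa. apply Hca. Qed.

End Filt.

Record point := mkpt { pa : S; pc : S; pF : S -> Prop; pgood : good pa pc pF }.

Definition Dx (x : point) (s : S) : Prop := D (pa x) (pF x) s.
Definition V (x : point) (s : S) : S -> Prop := fun u => Dx x (m s u).
Definition hrep (s : S) (x : point) (y : S -> Prop) : Prop := Dx x s /\ y = V x s.

Lemma Vclass x s t : Dx x (m s t) -> V x s = V x t.
Proof.
  intros H. unfold V. apply functional_extensionality. intros u.
  apply propositional_extensionality. unfold Dx in *. split; intros H'.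
  - rewrite mC in H. eapply (DT _ _ _ (pgood x)); eauto.
  - eapply (DT _ _ _ (pgood x)); eauto.
Qed.

Lemma msame s t : le s t -> m t s = s.
Proof. intros H. apply le_meq. easy. Qed.

Lemma h_partial s : is_partial_fun (hrep s).
Proof. intros x y1 y2 [_ H1] [_ H2]. congruence. Qed.

Lemma h_dom s x : pdom (hrep s) x <-> Dx x s.
Proof. split. intros [y [H _]]. easy. intros H. exists (V x s). split; auto. Qed.

Lemma h_meet s t : hrep (m s t) = pinter (hrep s) (hrep t).
Proof.
  apply functional_extensionality. intros x. apply functional_extensionality. intros y.
  apply propositional_extensionality. unfold hrep, pinter. split.
  - intros [Dst Hy]. unfold Dx in *.
    assert (Ds : D (pa x) (pF x) s) by (eapply (P1 _ _ _ (pgood x)); eauto).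
    assert (Dt : D (pa x) (pF x) t) by (rewrite mC in Dst; eapply (P1 _ _ _ (pgood x)); eauto).
    split; split; auto.
    + rewrite Hy. apply Vclass. unfold Dx. rewrite mC, msame. easy. apply le_ml.
    + rewrite Hy. apply Vclass. unfold Dx. rewrite mC, msame. easy. apply le_mr.
  - intros [[Ds Hys] [Dt Hyt]].
    assert (E : V x s = V x t) by congruence.
    assert (E2 := equal_f E s). unfold V in E2. rewrite mI in E2.
    assert (Dst : Dx x (m s t)).
    { rewrite mC. rewrite <- E2. easy. }
    split; auto. rewrite Hys. symmetry. apply Vclass. rewrite mC, msame. easy. apply le_ml.
Qed.

Lemma h_join s t : hrep (j s t) = poverride (hrep s) (hrep t).
Proof.
  apply functional_extensionality. intros x. apply functional_extensionality. intros y.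
  apply propositional_extensionality. unfold poverride. split.
  - intros [Dj Hy]. destruct (classic (Dx x s)) as [Ds|Ns].
    + left. split; auto. rewrite Hy. apply Vclass. rewrite msame. easy. apply o1.
    + right. split.
      * unfold Dx in *. destruct (L3a _ _ _ (pgood x) s t Dj) as [|Dt]; [contradiction|].
        split; auto. rewrite Hy. apply Vclass. unfold Dx. apply (L5 _ _ _ (pgood x)); auto.
      * rewrite h_dom. easy.
  - intros [[Ds Hy]|[[Dt Hy] Nd]].
    + assert (Dj : Dx x (j s t)) by (apply (L3b _ _ _ (pgood x)); auto).
      split; auto. rewrite Hy. symmetry. apply Vclass. rewrite msame. easy. apply o1.
    + rewrite h_dom in Nd.
      assert (Dj : Dx x (j s t)) by (apply (L3c _ _ _ (pgood x)); auto).
      split; auto. rewrite Hy. symmetry. apply Vclass. apply (L5 _ _ _ (pgood x)); auto.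
Qed.

Lemma maxfilter a c : ~ le a c ->
  exists F, (forall x y, F x -> le x y -> F y) /\ (forall x y, F x -> F y -> F (m x y)) /\
   F a /\ ~ F c /\ (forall x, ~ F x -> exists g, F g /\ le (m g x) c).
Proof.
  intros Hac.
  set (P := fun F : S -> Prop => (forall x y, F x -> le x y -> F y) /\
        (forall x y, F x -> F y -> F (m x y)) /\ F a /\ ~ F c).
  destruct (zorn_sets S P (fun x => le a x)) as [M [[Mup [Mmeet [Ma Mc]]] [IM Mmax]]].
  - split. intros x y H1 H2. eapply le_trans; eauto.
    split. intros x y H1 H2. apply le_m; auto.
    split. apply le_refl. easy.
  - intros C HC Hch HA0. split; [|split; [|split]].
    + intros x y [Hx|[A [CA Hx]]] Hxy.
      * left. eapply le_trans; eauto.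
      * right. exists A. split; auto. apply (proj1 (HC A CA)) with x; auto.
    + intros x y [Hx|[A [CA Hx]]] [Hy|[B [CB Hy]]].
      * left. apply le_m; auto.
      * right. exists B. split; auto. apply (proj1 (proj2 (HC B CB))); auto. apply HA0; auto.
      * right. exists A. split; auto. apply (proj1 (proj2 (HC A CA))); auto. apply HA0; auto.
      * destruct (Hch A B CA CB) as [I|I].
        -- right. exists B. split; auto. apply (proj1 (proj2 (HC B CB))); auto.
        -- right. exists A. split; auto. apply (proj1 (proj2 (HC A CA))); auto.
    + left. apply le_refl.
    + intros [H|[A [CA H]]]. contradiction. apply (HC A CA). auto.
  - exists M. split; auto. split; auto. split; auto. split; auto.
    intros x Nx. apply NNPP. intros N.
    set (B := fun y => exists g, M g /\ le (m g x) y).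
    assert (PB : P B).
    { split; [|split; [|split]].
      - intros y z [g [Mg Hg']] Hyz. exists g. split; auto. eapply le_trans; eauto.
      - intros y z [g1 [M1 H1]] [g2 [M2 H2]]. exists (m g1 g2). split; auto.
        apply le_m.
        + eapply le_trans. 2: apply H1. apply le_mm. apply le_ml. apply le_refl.
        + eapply le_trans. 2: apply H2. apply le_mm. apply le_mr. apply le_refl.
      - exists a. split; auto. apply le_ml.
      - intros [g [Mg Hg']]. apply N. exists g. auto. }
    assert (IB : incl M B).
    { intros y My. exists y. split; auto. apply le_ml. }
    apply Nx. apply (Mmax B PB IB). exists a. split; auto. apply le_mr.
Qed.

Lemma h_inj s t : hrep s = hrep t -> le s t.
Proof.
  intros E. apply NNPP. intros N.
  assert (Hac : ~ le s (m s t)).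
  { intros H. apply N. eapply le_trans. apply H. apply le_mr. }
  destruct (maxfilter s (m s t) Hac) as [F [Fu [Fm [Fs [Fc' Fx]]]]].
  assert (G : good s (m s t) F).
  { repeat split; auto. apply le_ml. }
  set (p := mkpt s (m s t) F G).
  assert (H1 : hrep s p (V p s)).
  { split; auto. left. easy. }
  rewrite E in H1. destruct H1 as [Dt Ev].
  assert (E2 := equal_f Ev s). unfold V in E2. rewrite mI in E2.
  assert (Ds : Dx p s) by (left; easy).
  rewrite E2 in Ds. unfold Dx in Ds. rewrite mC in Ds.
  apply (nDc s (m s t) F G). exact Ds.
Qed.

Lemma completeness : functional j m.
Proof.
  exists point, (S -> Prop), hrep.
  split. apply h_partial.
  split. intros s t E. apply le_antisym; apply h_inj; auto.
  split. apply h_join. apply h_meet.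
Qed.

End Alg.


Lemma ext2 {X Y : Type} (R1 R2 : X -> Y -> Prop) : (forall x y, R1 x y <-> R2 x y) -> R1 = R2.
Proof.
  intros H. apply functional_extensionality. intros x. apply functional_extensionality. intros y.
  apply propositional_extensionality. apply H.
Qed.

Lemma soundness (S : Type) (join meet : S -> S -> S) :
  functional join meet -> ado_semilattice meet join.
Proof.
  intros (X & Y & h & Hpf & Hinj & Hj & Hm).
  Ltac go Hinj Hj Hm := apply Hinj; repeat first [rewrite Hj | rewrite Hm]; apply ext2; intros u v;
     unfold poverride, pinter, pdom.
  unfold ado_semilattice, o_semilattice, is_semilattice, distributive_o, associative_o, mle.
  repeat split; intros.
  all: go Hinj Hj Hm.
  1-6: tauto.
  2: tauto.
  - split.
    + intros [H1 H2]. split; auto.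
      destruct (classic (h x u v /\ h y u v)) as [H|H]. left; easy. right. split. easy.
      intros [v' [Hx Hy]]. apply H. rewrite (Hpf _ _ _ _ H1 Hx). easy.
    + tauto.
  - assert (E : (exists y0 : Y, h x u y0 \/ h y u y0 /\ ~ (exists y : Y, h x u y)) <->
                (exists y0, h x u y0) \/ (exists y0, h y u y0)).
    { split.
      - intros [y0 [H|[H _]]]; [left|right]; exists y0; easy.
      - intros [[y0 H]|[y0 H]].
        + exists y0. left. easy.
        + destruct (classic (exists y : Y, h x u y)) as [[y1 H1]|N].
          * exists y1. left. easy.
          * exists y0. right. easy. }
    tauto.
Qed.

Theorem theorem4p10 (S : Type) (join meet : S -> S -> S) :
  functional join meet <-> ado_semilattice meet join.
Proof.
  split.
  - apply soundness.
  - intros [[[mA [mC mI]] [o1 [o2 [o3 o4]]]] [dist jA]].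
    apply (completeness S meet join); assumption.
Qed.
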